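(* Let $G$ be a finite totally rectangular digraph that contains a cycle of net length $d>0$. Then $G$ contains a directed cycle of length $d$.
   Context: In a digraph $G$, a path is a sequence of vertices $(u_1,\dots,u_k)$ together with edges $(e_1,\dots,e_{k-1})$ where each $e_i$ is either $(u_i,u_{i+1})\in E(G)$ (a forward edge) or $(u_{i+1},u_i)\in E(G)$ (a backward edge); vertices need not be distinct. Its length is $k-1$, its net length is the number of forward edges minus the number of backward edges, and it is directed if all edges are forward. A cycle is a sequence $(u_0,\dots,u_{k-1})$ with edges $(e_0,\dots,e_{k-1})$ such that $(u_0,\dots,u_{k-1},u_0)$ with these edges is a path; its length is $k$, its net length is the net length of this path, and it is directed if this path is directed. A digraph $G$ is $k$-rectangular if whenever $G$ contains directed paths of length $k$ from $x$ to $y$, from $x'$ to $y$, and from $x'$ to $y'$, then $G$ contains a directed path of length $k$ from $x$ to $y'$. $G$ is totally rectangular if it is $k$-rectangular for all $k\ge 1$. *)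

(* Defs.v *)
From mathcomp Require Import all_boot.
Set Warnings "-notation-overridden".
Set Implicit Arguments. Unset Strict Implicit. Unset Printing Implicit Defensive.

(* An oriented step: the next vertex and whether the edge is forward (true)
   or backward (false). *)
Definition ostep_ok {V : finType} (E : rel V) (u : V) (st : V * bool) : bool :=
  if st.2 then E u st.1 else E st.1 u.

Fixpoint opath {V : finType} (E : rel V) (x : V) (s : seq (V * bool)) : bool :=
  match s with
  | [::] => true
  | st :: s' => ostep_ok E x st && opath E st.1 s'
  end.

Definition n_forward {V : finType} (s : seq (V * bool)) : nat := count (fun st => st.2) s.
Definition n_backward {V : finType} (s : seq (V * bool)) : nat := count (fun st => ~~ st.2) s.

Definition last_vertex {V : finType} (x : V) (s : seq (V * bool)) : V :=
  last x (map fst s).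

Definition is_cycle {V : finType} (E : rel V) (x : V) (s : seq (V * bool)) : Prop :=
  0 < size s /\ opath E x s /\ last_vertex x s = x.

(* a cycle of (positive) net length d: forward - backward = d,
   i.e. forward = backward + d *)
Definition has_cycle_net_length {V : finType} (E : rel V) (d : nat) : Prop :=
  exists x s, is_cycle E x s /\ n_forward s = n_backward s + d.

Definition dpath_len {V : finType} (E : rel V) (k : nat) (x y : V) : Prop :=
  exists p : seq V, size p = k /\ path E x p /\ last x p = y.

Definition has_directed_cycle_len {V : finType} (E : rel V) (d : nat) : Prop :=
  exists x : V, dpath_len E d x x.

Definition k_rectangular {V : finType} (E : rel V) (k : nat) : Prop :=
  forall x y x' y' : V,
    dpath_len E k x y -> dpath_len E k x' y -> dpath_len E k x' y' ->
    dpath_len E k x y'.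

Definition totally_rectangular {V : finType} (E : rel V) : Prop :=
  forall k, 1 <= k -> k_rectangular E k.

(* Main.v *)
Require Import Defs.
From mathcomp Require Import all_boot zify.
Set Implicit Arguments. Unset Strict Implicit. Unset Printing Implicit Defensive.
From Stdlib Require Import Classical.

Definition seg_ok {V : finType} (E : rel V) (v : V) (t : (bool * nat) * V) : Prop :=
  0 < t.1.2 /\ (if t.1.1 then dpath_len E t.1.2 v t.2 else dpath_len E t.1.2 t.2 v).

Fixpoint zz {V : finType} (E : rel V) (v : V) (s : seq ((bool * nat) * V)) : Prop :=
  match s with [::] => True | t :: s' => seg_ok E v t /\ zz E t.2 s' end.

Definition zend {V : finType} (v : V) (s : seq ((bool * nat) * V)) := last v (map snd s).

Definition fw {V : finType} (s : seq ((bool * nat) * V)) :=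
  sumn (map (fun t => if t.1.1 then t.1.2 else 0) s).
Definition bw {V : finType} (s : seq ((bool * nat) * V)) :=
  sumn (map (fun t => if t.1.1 then 0 else t.1.2) s).

Lemma zend_cat {V : finType} (v : V) s1 s2 : zend v (s1 ++ s2) = zend (zend v s1) s2.
Proof. by rewrite /zend map_cat last_cat. Qed.

Lemma zz_cat {V : finType} (E : rel V) v s1 s2 :
  zz E v (s1 ++ s2) <-> zz E v s1 /\ zz E (zend v s1) s2.
Proof.
elim: s1 v => [|t s1 IH] v /=; first by tauto.
rewrite IH /zend /=; tauto.
Qed.

Lemma cz_rot {V : finType} (E : rel V) v s1 s2 :
  zz E v (s1 ++ s2) -> zend v (s1 ++ s2) = v ->
  exists v', zz E v' (s2 ++ s1) /\ zend v' (s2 ++ s1) = v'.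
Proof.
rewrite zz_cat zend_cat => -[h1 h2] he; exists (zend v s1).
by rewrite zz_cat zend_cat he.
Qed.

Lemma fw_cat {V : finType} (s1 s2 : seq ((bool * nat) * V)) : fw (s1 ++ s2) = fw s1 + fw s2.
Proof. by rewrite /fw map_cat sumn_cat. Qed.
Lemma bw_cat {V : finType} (s1 s2 : seq ((bool * nat) * V)) : bw (s1 ++ s2) = bw s1 + bw s2.
Proof. by rewrite /bw map_cat sumn_cat. Qed.
Lemma dp_cat {V : finType} (E : rel V) a b x y z :
  dpath_len E a x y -> dpath_len E b y z -> dpath_len E (a + b) x z.
Proof.
move=> [p [sp [pp lp]]] [q [sq [pq lq]]]; exists (p ++ q); split.
  by rewrite size_cat sp sq.
by rewrite cat_path pp lp pq last_cat lp lq.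
Qed.

Lemma dp_split {V : finType} (E : rel V) a b x z :
  dpath_len E (a + b) x z -> exists y, dpath_len E a x y /\ dpath_len E b y z.
Proof.
move=> [p [sp [pp lp]]]; exists (last x (take a p)); split.
  exists (take a p); split; first by rewrite size_take sp; case: ifP => //; lia.
  split => //; move: pp; rewrite -{1}(cat_take_drop a p) cat_path; by case/andP.
exists (drop a p); split; first by rewrite size_drop sp; lia.
move: pp lp; rewrite -{1 2}(cat_take_drop a p) cat_path last_cat.
by case/andP.
Qed.

Lemma dp0 {V : finType} (E : rel V) x y : dpath_len E 0 x y -> x = y.
Proof. by move=> [[|? ?] [//= _ [_ <-]]]. Qed.

Lemma dp0' {V : finType} (E : rel V) x : dpath_len E 0 x x.
Proof. by exists [::]. Qed.

Lemma dp1 {V : finType} (E : rel V) x y : E x y -> dpath_len E 1 x y.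
Proof. by move=> h; exists [:: y]; rewrite /= h. Qed.

Lemma dp_eq {V : finType} (E : rel V) a b x y : dpath_len E a x y -> a = b -> dpath_len E b x y.
Proof. by move=> h <-. Qed.

Lemma zz_pair {V : finType} (E : rel V) v a b t : zz E v (a :: b :: t) -> a.1.1 = b.1.1 ->
  zz E v (((a.1.1, a.1.2 + b.1.2), b.2) :: t).
Proof.
case: a b => [[oa la] wa] [[ob lb] wb] [[la0 ha] [[lb0 hb] ht]] hob; simpl in *; subst ob.
split=> //; split=> /=; first lia.
case: oa ha hb => ha hb; first exact: dp_cat ha hb.
rewrite addnC; exact: dp_cat hb ha.
Qed.

Lemma zz_triple {V : finType} (E : rel V) v a b c t : totally_rectangular E ->
  zz E v (a :: b :: c :: t) -> b.1.1 = ~~ a.1.1 -> c.1.1 = a.1.1 ->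
  b.1.2 <= a.1.2 -> b.1.2 <= c.1.2 ->
  zz E v (((a.1.1, a.1.2 - b.1.2 + c.1.2), c.2) :: t).
Proof.
move=> tr.
case: a b c => [[oa la] wa] [[ob lb] wb] [[oc lc] wc] 
  [[la0 ha] [[lb0 hb] [[lc0 hc] ht]]] hob hoc hab hcb; simpl in *; subst ob oc.
split=> //; split=> /=; first lia.
case: oa ha hb hc => /= ha hb hc.
- move: ha; rewrite -(subnK hab) => /dp_split [x1 [h1 h2]].
  move: hc; rewrite -(subnKC hcb) => /dp_split [r1 [h3 h4]].
  have h5 : dpath_len E lb x1 r1 by apply: (tr lb lb0 x1 wa wb r1).
  by apply: (dp_eq (dp_cat (dp_cat h1 h5) h4)); lia.
- move: hc; rewrite -(subnK hcb) => /dp_split [c1 [h1 h2]].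
  move: ha; rewrite -(subnKC hab) => /dp_split [s1 [h3 h4]].
  have h5 : dpath_len E lb c1 s1 by apply: (tr lb lb0 c1 wb wa s1).
  by apply: (dp_eq (dp_cat (dp_cat h1 h5) h4)); lia.
Qed.

Definition Good {V : finType} (E : rel V) d (s : seq ((bool * nat) * V)) :=
  exists v, zz E v s /\ zend v s = v /\ fw s = bw s + d.

Lemma good_rot {V : finType} (E : rel V) d s1 s2 : Good E d (s1 ++ s2) -> Good E d (s2 ++ s1).
Proof.
move=> [v [h1 [h2 h3]]]; have [v' [h4 h5]] := cz_rot h1 h2.
by exists v'; split => //; split => //; move: h3; rewrite !fw_cat !bw_cat; lia.
Qed.

Lemma good_pair {V : finType} (E : rel V) d a b t : Good E d (a :: b :: t) -> a.1.1 = b.1.1 ->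
  Good E d (((a.1.1, a.1.2 + b.1.2), b.2) :: t).
Proof.
move=> [v [h1 [h2 h3]]] e; exists v; split; first exact: zz_pair.
split; first by move: h2; rewrite /zend.
move: h3; rewrite /fw /bw /= e; case: (b.1.1); lia.
Qed.

Lemma good_triple {V : finType} (E : rel V) d a b c t : totally_rectangular E ->
  Good E d (a :: b :: c :: t) -> b.1.1 = ~~ a.1.1 -> c.1.1 = a.1.1 ->
  b.1.2 <= a.1.2 -> b.1.2 <= c.1.2 ->
  Good E d (((a.1.1, a.1.2 - b.1.2 + c.1.2), c.2) :: t).
Proof.
move=> tr [v [h1 [h2 h3]]] e1 e2 l1 l2; exists v; split; first exact: zz_triple.
split; first by move: h2; rewrite /zend.
move: h3; rewrite /fw /bw /= e1 e2; case: (a.1.1) => /=; lia.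
Qed.

Lemma notsorted_split {T : Type} (r : rel T) s : ~~ sorted r s ->
  exists s1 a b s2, s = s1 ++ a :: b :: s2 /\ ~~ r a b.
Proof.
elim: s => [|x [|y t] IH] //= h.
case/nandP: h => h; first by exists [::], x, y, t.
have [s1 [a [b [s2 [-> hr]]]]] := IH h.
by exists (x :: s1), a, b, s2.
Qed.

Lemma sorted_mid {T : Type} (r : rel T) s1 a b s2 : sorted r (s1 ++ a :: b :: s2) -> r a b.
Proof.
elim: s1 => [/= /andP [] //|x s1 IH] /= h; apply: IH.
by move: h; case: (s1 ++ _) => //= y t /andP [].
Qed.

Definition hasLM {V : finType} (s : seq ((bool * nat) * V)) :=
  exists s1 a b c s2, s = s1 ++ [:: a, b, c & s2] /\ b.1.2 <= a.1.2 /\ b.1.2 <= c.1.2.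

Lemma endL {V : finType} (t : seq ((bool * nat) * V)) a b : ~ hasLM (a :: b :: t) ->
  a.1.2 <= b.1.2 \/ (last b t).1.2 < a.1.2.
Proof.
elim: t a b => [|c t IH] a b h /=.
  by case: (leqP a.1.2 b.1.2); [left|right].
case: (leqP a.1.2 b.1.2) => hab; first by left.
right; have : ~ hasLM (b :: c :: t).
  move=> [s1 [x [y [z [s2 [e [h1 h2]]]]]]]; apply: h.
  by exists (a :: s1), x, y, z, s2; rewrite e.
move/IH => [hbc|]; last by lia.
by exfalso; apply: h; exists [::], a, b, c, t; split => //; split => //; lia.
Qed.

Lemma hasLM_rev {V : finType} (s : seq ((bool * nat) * V)) : hasLM (rev s) -> hasLM s.
Proof.
move=> [s1 [a [b [c [s2 [e [h1 h2]]]]]]].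
exists (rev s2), c, b, a, (rev s1); split; last by [].
by rewrite -(revK s) e rev_cat /= !rev_cons -!cats1 -!catA.
Qed.

Definition altb {V : finType} (x y : (bool * nat) * V) : bool := x.1.1 != y.1.1.

Lemma alt2 (x y z : bool) : x != y -> y != z -> y = ~~ x /\ z = x.
Proof. by case: x; case: y; case: z. Qed.

Lemma split_last2 {T : Type} (s : seq T) : 2 <= size s -> exists u y z, s = u ++ [:: y; z].
Proof.
elim: s => [|x [|x2 [|x3 s]] IH] //= _.
  by exists [::], x, x2.
have [u [y [z e]]] := IH isT.
by exists (x :: u), y, z; rewrite e.
Qed.

Lemma head_ex {T : Type} (b c : T) t u y z :
  b :: c :: t = u ++ [:: y; z] -> exists w, u ++ [:: y] = b :: w.
Proof. by case: u => [|u0 u'] /= [-> _]; eexists. Qed.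

Lemma reduce {V : finType} (E : rel V) d : 0 < d -> totally_rectangular E ->
  forall n s, size s <= n -> Good E d s ->
  exists x p B, dpath_len E (B + d) x p /\ dpath_len E B x p.
Proof.
move=> d0 tr; elim=> [|n IH] s.
  by case: s => // _ [v [_ [_]]]; rewrite /fw /bw /=; lia.
move=> hs hg.
have step : forall s', size s' < size s -> Good E d s' ->
    exists x p B, dpath_len E (B + d) x p /\ dpath_len E B x p.
  by move=> s' h1 h2; apply: (IH s') => //; lia.
case: s hs hg step => [|a [|b [|c t]]] hs hg step.
- by move: hg => [v [_ [_]]]; rewrite /fw /bw /=; lia.
- move: hg => [v [[[la0 ha] _] [hz]]]; rewrite /zend /fw /bw /= in hz *.
  clear hs step; case: a la0 ha hz => [[[|] l] w] /= la0 ha hz; last by lia.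
  move=> e; subst w; exists v, v, 0; split; last exact: dp0'.
  by apply: (dp_eq ha); lia.
- case eo: (a.1.1 == b.1.1).
    by apply: step (good_pair hg (eqP eo)).
  move: hg => [v [[[la0 ha] [[lb0 hb] _]] [hz]]]; rewrite /zend /fw /bw /= in hz *.
  clear hs step; case: a b eo la0 ha lb0 hb hz => [[[|] la] wa] [[[|] lb] wb] //= _ la0 ha lb0 hb hz e;
    subst wb.
  + by exists v, wa, lb; split => //; rewrite -(_ : la = lb + d) //; lia.
  + by exists wa, v, la; split => //; rewrite -(_ : lb = la + d) //; lia.
- set s := [:: a, b, c & t] in hs hg step *.
  case: (boolP (sorted altb s)) => hsort.
  +
    have [u [y [z es]]] : exists u y z, b :: c :: t = u ++ [:: y; z].
      by apply: split_last2.
    have es' : s = (a :: u) ++ [:: y; z] by rewrite /s es.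
    case: (boolP (altb z a)) => hza; last first.
      have hg2 : Good E d ((z :: a :: u ++ [:: y])).
        apply: (@good_rot V E d (a :: u ++ [:: y]) [:: z]).
        have -> : (a :: u ++ [:: y]) ++ [:: z] = s by rewrite es' /= -catA.
        exact: hg.
      apply: step (good_pair hg2 _); last by move: hza; rewrite /altb negbK => /eqP.
      by rewrite es' /= !size_cat /=; lia.
    case: (classic (hasLM s)) => hlm.
      move: hlm => [s1 [x [x2 [x3 [s2 [e [h1 h2]]]]]]].
      have hg2 : Good E d (x :: x2 :: x3 :: s2 ++ s1).
        by apply: (@good_rot V E d s1 (x :: x2 :: x3 :: s2)); rewrite -e.
      have a1 : altb x x2 by apply: (sorted_mid (s1 := s1) (s2 := x3 :: s2)); rewrite -e.
      have a2 : altb x2 x3.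
        by apply: (sorted_mid (s1 := rcons s1 x) (s2 := s2)); rewrite cat_rcons -e.
      have [e1 e2] := alt2 a1 a2.
      apply: step (good_triple tr hg2 e1 e2 h1 h2).
      by rewrite e /= !size_cat /=; lia.
    have hL := endL hlm.
    have hlm' : ~ hasLM (rev s) by move/hasLM_rev.
    have er : rev s = [:: z, y & rev (a :: u)].
      by rewrite es' rev_cat.
    rewrite er in hlm'.
    have hR := endL hlm'.
    have lz : last b (c :: t) = z by move: (congr1 (last a) es); rewrite last_cat.
    have la' : last y (rev (a :: u)) = a by rewrite rev_cons last_rcons.
    rewrite lz in hL; rewrite la' in hR.
    have case1 : a.1.2 <= b.1.2 -> a.1.2 <= z.1.2 ->
        exists x p B, dpath_len E (B + d) x p /\ dpath_len E B x p.
      move=> h1 h2.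
      have [w ew] := head_ex es.
      have hg2 : Good E d [:: z, a, b & w].
        rewrite -ew; apply: (@good_rot V E d (a :: u ++ [:: y]) [:: z]).
        have -> : (a :: u ++ [:: y]) ++ [:: z] = s by rewrite es' /= -catA.
        exact: hg.
      have a2 : altb a b by apply: (sorted_mid (s1 := [::]) (s2 := c :: t)).
      have [e1 e2] := alt2 hza a2.
      apply: step (good_triple tr hg2 e1 e2 h2 h1).
      have : size (b :: w) = size (u ++ [:: y]) by rewrite ew.
      by rewrite es' /= !size_cat /=; lia.
    have case2 : z.1.2 <= y.1.2 -> z.1.2 <= a.1.2 ->
        exists x p B, dpath_len E (B + d) x p /\ dpath_len E B x p.
      move=> h1 h2.
      have hg2 : Good E d [:: y, z, a & u].
        by apply: (@good_rot V E d (a :: u) [:: y; z]); rewrite -es'.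
      have a1 : altb y z by apply: (sorted_mid (s1 := a :: u) (s2 := [::])); rewrite -es'.
      have [e1 e2] := alt2 a1 hza.
      apply: step (good_triple tr hg2 e1 e2 h1 h2).
      by rewrite es' /= !size_cat /=; lia.
    case: hL => hL; case: hR => hR.
    * by case: (leqP a.1.2 z.1.2) => h; [apply: case1|apply: case2 => //; lia].
    * by apply: case1 => //; lia.
    * by apply: case2 => //; lia.
    * by lia.
  + have [s1 [x [x2 [s2 [e hr]]]]] := notsorted_split hsort.
    have hg2 : Good E d (x :: x2 :: s2 ++ s1).
      by apply: (@good_rot V E d s1 (x :: x2 :: s2)); rewrite -e.
    apply: step (good_pair hg2 _); last by move: hr; rewrite /altb negbK => /eqP.
    by rewrite e /= !size_cat /=; lia.
Qed.
Lemma claim {V : finType} (E : rel V) d : 0 < d -> totally_rectangular E ->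
  forall r v w q, dpath_len E d v w -> dpath_len E r v q -> dpath_len E r w q ->
  has_directed_cycle_len E d.
Proof.
move=> d0 tr; elim=> [|r IH] v w q hvw hvq hwq.
  by move: (dp0 hvq) (dp0 hwq) hvw => -> ->; exists q.
have [v1 [hv1 hv1w]] : exists v1, dpath_len E 1 v v1 /\ dpath_len E (d - 1) v1 w.
  by apply: dp_split; rewrite subnKC.
have := dp_cat hv1w hwq; rewrite (_ : d - 1 + r.+1 = r + d); last by lia.
move=> /dp_split [q' [h1 _]].
have hvq' := dp_cat hv1 h1; rewrite add1n in hvq'.
have hwq' : dpath_len E r.+1 w q' by apply: (tr r.+1 _ w q v q').
move: hwq'; rewrite -add1n => /dp_split [w1 [hw1 hw1q]].
apply: (IH v1 w1 q') => //.
have := dp_cat hv1w hw1; rewrite subnK //.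
Qed.

Lemma conv_zz {V : finType} (E : rel V) x s0 :
  opath E x s0 -> zz E x (map (fun st => ((st.2, 1), st.1)) s0).
Proof.
elim: s0 x => [|[y o] s0 IH] x //= /andP [h1 h2]; split; last exact: IH.
split => //=; rewrite /ostep_ok /= in h1; case: o h1 => /= h1; exact: dp1.
Qed.

Lemma conv_fw {V : finType} (s0 : seq (V * bool)) :
  fw (map (fun st => ((st.2, 1), st.1)) s0) = n_forward s0 /\
  bw (map (fun st => ((st.2, 1), st.1)) s0) = n_backward s0.
Proof.
rewrite /fw /bw /n_forward /n_backward.
elim: s0 => [|[y o] s0 [IH1 IH2]] //=; rewrite IH1 IH2; by case: o.
Qed.

Theorem mainTheorem10 (V : finType) (E : rel V) (d : nat) :
  0 < d ->
  totally_rectangular E ->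
  has_cycle_net_length E d ->
  has_directed_cycle_len E d.
Proof.
move=> d0 tr [x [s0 [[_ [hp hl]] hn]]].
set s := map (fun st => ((st.2, 1), st.1)) s0.
have hg : Good E d s.
  exists x; split; first exact: conv_zz.
  have [h1 h2] := conv_fw s0.
  split; last by rewrite h1 h2.
  by rewrite /zend /s -map_comp.
have [y [p [B [h1 h2]]]] := reduce d0 tr (leqnn _) hg.
move: h1; rewrite addnC => /dp_split [z [h3 h4]].
exact: (claim d0 tr h3 h2 h4).
Qed.
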